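(* In the setting of $N$ classical particles of equal mass $m$ and charge $q$ with Hamiltonian $H(\mathbf X,\mathbf P)=\frac1{2m}\sum_{i=1}^N|\mathbf p_i-q\boldsymbol A(\mathbf x_i)|^2$ for a smooth vector potential $\boldsymbol A:\mathbb R^3\to\mathbb R^3$, let $\mathcal M_m\in O(3)$ with $\mathcal M_m^2=I$ and let $\mathcal M$ act as $(\mathbf x_i,\mathbf p_i)\mapsto(\mathcal M_m\mathbf x_i,-\mathcal M_m\mathbf p_i)$ for every $i$ (block diagonal on $\mathbb R^{3N}$ with identical $3\times3$ blocks $\mathcal M_m$). Then $\mathcal M$ yields time reversal invariance if and only if there is a smooth $G:\mathbb R^3\to\mathbb R$ with $$\mathcal M_m\boldsymbol A(\mathcal M_m\mathbf x)=-\boldsymbol A(\mathbf x)-\nabla G(\mathbf x)\quad\text{for all }\mathbf x\in\mathbb R^3,$$ i.e. $\mathcal M_m\boldsymbol A(\mathcal M_m\,\cdot)\in[-\boldsymbol A]$.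
   Context: $\mathcal M$ yields time reversal invariance if there is a smooth $G:\mathbb R^3\to\mathbb R$ with $H(\mathcal M\Gamma)=\frac1{2m}\sum_i|\mathbf p_i-q(\boldsymbol A(\mathbf x_i)+\nabla G(\mathbf x_i))|^2$ for all $\Gamma=(\mathbf x_i,\mathbf p_i)_i$. $[\boldsymbol A]$ denotes the gauge class $\{\boldsymbol A+\nabla G\}$. *)

(* Defs.v *)
From HB Require Import structures.
From mathcomp Require Import all_boot all_order all_algebra.
From mathcomp Require Import all_classical all_reals all_analysis.
Set Implicit Arguments. Unset Strict Implicit. Unset Printing Implicit Defensive.
Import Order.TTheory GRing.Theory Num.Theory.
Import numFieldNormedType.Exports.
Local Open Scope ring_scope.

Section Defs.
Variable R : realType.

Fixpoint iter_dir {W : normedModType R} (vs : seq 'cV[R]_3) (f : 'cV[R]_3 -> W)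
  : 'cV[R]_3 -> W :=
  match vs with
  | [::] => f
  | v :: vs' => fun x => derive (iter_dir vs' f) x v
  end.

Definition smooth {W : normedModType R} (f : 'cV[R]_3 -> W) : Prop :=
  forall vs : seq 'cV[R]_3,
    continuous (iter_dir vs f) /\
    forall (v x : 'cV[R]_3), derivable (iter_dir vs f) x v.

Definition evec (i : 'I_3) : 'cV[R]_3 := delta_mx i ord0.

Definition grad (G : 'cV[R]_3 -> R^o) (x : 'cV[R]_3) : 'cV[R]_3 :=
  \col_i derive G x (evec i).

Definition sqnorm (v : 'cV[R]_3) : R := \sum_(i < 3) (v i ord0) ^+ 2.

Definition hamiltonian (N : nat) (m q : R) (A : 'cV[R]_3 -> 'cV[R]_3)
  (X P : 'I_N -> 'cV[R]_3) : R :=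
  (2 * m)^-1 * \sum_(i < N) sqnorm (P i - q *: A (X i)).

Definition Mact_x (N : nat) (Mm : 'M[R]_3) (X : 'I_N -> 'cV[R]_3) :=
  fun i => Mm *m X i.
Definition Mact_p (N : nat) (Mm : 'M[R]_3) (P : 'I_N -> 'cV[R]_3) :=
  fun i => - (Mm *m P i).

Definition yields_TRI (N : nat) (m q : R) (A : 'cV[R]_3 -> 'cV[R]_3)
  (Mm : 'M[R]_3) : Prop :=
  exists G : 'cV[R]_3 -> R^o, smooth G /\
    forall X P : 'I_N -> 'cV[R]_3,
      hamiltonian m q A (Mact_x Mm X) (Mact_p Mm P) =
      (2 * m)^-1 * \sum_(i < N) sqnorm (P i - q *: (A (X i) + grad G (X i))).

End Defs.

(* Main.v *)
Require Import Defs.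
From HB Require Import structures.
From mathcomp Require Import all_boot all_order all_algebra.
From mathcomp Require Import all_classical all_reals all_analysis.
Import Order.TTheory GRing.Theory Num.Theory.
Import numFieldNormedType.Exports.
Local Open Scope ring_scope.

Lemma sqnormE (R : realType) (v : 'cV[R]_3) : sqnorm v = (v^T *m v) ord0 ord0.
Proof. rewrite /sqnorm mxE; apply: eq_bigr => i _; by rewrite mxE expr2. Qed.

Lemma sqnormM (R : realType) (Mm : 'M[R]_3) (v : 'cV[R]_3) :
  Mm^T *m Mm = 1%:M -> sqnorm (Mm *m v) = sqnorm v.
Proof. by move=> H; rewrite !sqnormE trmx_mul -mulmxA (mulmxA Mm^T) H mul1mx. Qed.

Lemma sqnormN (R : realType) (v : 'cV[R]_3) : sqnorm (- v) = sqnorm v.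
Proof. by rewrite /sqnorm; apply: eq_bigr => i _; rewrite mxE sqrrN. Qed.

Lemma sqnorm0 (R : realType) : sqnorm (0 : 'cV[R]_3) = 0.
Proof. by rewrite /sqnorm big1 // => i _; rewrite mxE expr0n. Qed.

Lemma sqnorm_eq0 (R : realType) (v : 'cV[R]_3) : sqnorm v = 0 -> v = 0.
Proof.
move=> /eqP; rewrite /sqnorm psumr_eq0; last by move=> i _; exact: sqr_ge0.
move=> /allP H; apply/matrixP => i j; rewrite (ord1 j) mxE.
by have /= := H i (mem_index_enum i); rewrite sqrf_eq0 => /eqP.
Qed.

Theorem mainTheorem11 (R : realType) (N : nat) (m q : R)
  (A : 'cV[R]_3 -> 'cV[R]_3) (Mm : 'M[R]_3) :
  (0 < N)%N -> 0 < m -> q != 0 ->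
  smooth A ->
  Mm^T *m Mm = 1%:M -> Mm *m Mm = 1%:M ->
  (yields_TRI N m q A Mm <->
   exists G : 'cV[R]_3 -> R^o, smooth G /\
     forall x : 'cV[R]_3, Mm *m A (Mm *m x) = - A x - grad G x).
Proof.
move=> N0 m0 q0 _ HT H2; split.
- case=> G [sG H]; exists G; split => // x.
  have := H (fun _ => x) (fun _ => q *: (A x + grad G x)).
  rewrite /hamiltonian /Mact_x /Mact_p => E.
  move: E; rewrite [in X in _ = X]big1 => [|i _]; last by rewrite subrr sqnorm0.
  rewrite mulr0 => /eqP; rewrite mulf_eq0 invr_eq0 mulf_eq0.
  rewrite pnatr_eq0 /= (gt_eqF m0) /= sumr_const card_ord mulrn_eq0.
  rewrite (gtn_eqF N0) /= => /eqP /sqnorm_eq0 /(congr1 (mulmx Mm)).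
  rewrite mulmx0 mulmxBr mulmxN mulmxA H2 mul1mx -scalemxAr.
  move=> /eqP; rewrite -opprD oppr_eq0 -scalerDr scaler_eq0 (negbTE q0) /=.
  by rewrite addrC addr_eq0 => /eqP ->; rewrite opprD.
- case=> G [sG H]; exists G; split => // X P.
  rewrite /hamiltonian /Mact_x /Mact_p; congr (_ * _); apply: eq_bigr => i _.
  have -> : A (X i) + grad G (X i) = - (Mm *m A (Mm *m X i)) by rewrite H opprD !opprK.
  rewrite -(@sqnormM _ Mm _ HT) mulmxBr mulmxN mulmxA H2 mul1mx -scalemxAr.
  rewrite -sqnormN scalerN opprK.
rewrite opprD !opprK; reflexivity.
Qed.
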